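(* (i) For integers $p\geq 0$, $s,t\geq 1$ and $\max\{s+p+2,\,t+p+2\}\leq n\leq s+t+p+1$, the graph $M_{n,n-1}^{s,t}$ is not $2p$-Hamilton-biconnected. (ii) For integers $p\geq 0$, $s,t\geq 1$ and $n=s+t+p$, the graph $M_{n,n}^{s,t}$ is not $2p$-Hamilton-biconnected. (iii) For integers $p\geq 0$ and $n\geq p+6$, the graph $N_{n,n}^{p,1}$ is not $2p$-Hamilton-biconnected.
   Context: For a bipartite graph $G=(X,Y;E)$: if $|X|=|Y|$ (balanced), $G$ is Hamilton-biconnected if for every $u\in X$, $v\in Y$ there is a Hamiltonian path with ends $u,v$; if $|X|=|Y|+1$ (nearly balanced), $G$ is Hamilton-biconnected if for any two distinct $u,v\in X$ there is a Hamiltonian path with ends $u,v$. A vertex set $W$ is balanced if $|W\cap X|=|W\cap Y|$; $G$ is $2p$-Hamilton-biconnected if for every balanced $W$ with $|W|=2p$, the subgraph induced by $V(G)\setminus W$ is Hamilton-biconnected. $M_{n,m}^{s,t}$: parts $X=X_1\cup X_2$ (with $n$ vertices), $Y=Y_1\cup Y_2$ (with $m$ vertices), $|X_1|=s$, $|X_2|=n-s$, $|Y_1|=m-t$, $|Y_2|=t$; edges are all pairs between $X_1$ and $Y_1$, between $X_2$ and $Y_1$, and between $X_2$ and $Y_2$. $N_{n,n}^{p,1}$: parts $X=X_1\cup X_2\cup X_3$, $Y=Y_1\cup Y_2\cup Y_3$, $|X_1|=|Y_1|=n-p-2$, $|X_2|=|Y_2|=p+1$, $|X_3|=|Y_3|=1$;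 edges are all pairs between $X_i$ and $Y_i$ ($i=1,2,3$), between $X_1$ and $Y_2$, between $X_2$ and $Y_1\cup Y_3$, and between $X_3$ and $Y_2$. *)

(* Defs.v *)
From mathcomp Require Import all_boot.
Set Implicit Arguments. Unset Strict Implicit. Unset Printing Implicit Defensive.

(* A bipartite graph G = (X, Y; E) is given by finite types X, Y (the parts)
   and a boolean adjacency relation adj : X -> Y -> bool.
   The vertex set is the disjoint union X + Y. *)
Section Bip.
Variables (X Y : finType) (adj : X -> Y -> bool).

Definition bedge (a b : X + Y) : bool :=
  match a, b with
  | inl x, inr y => adj x y
  | inr y, inl x => adj x y
  | _, _ => false
  end.

Definition ham_path (S : {set X + Y}) (u v : X + Y) : Prop :=
  exists s : seq (X + Y),
    [/\ uniq (u :: s), (forall z, (z \in u :: s) = (z \in S)),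
        path bedge u s & last u s = v].

Definition partX (S : {set X + Y}) : {set X} := [set x | inl x \in S].
Definition partY (S : {set X + Y}) : {set Y} := [set y | inr y \in S].

Definition ham_biconnected (S : {set X + Y}) : Prop :=
  (#|partX S| = #|partY S| ->
     forall x y, x \in partX S -> y \in partY S -> ham_path S (inl x) (inr y)) /\
  (#|partX S| = #|partY S| + 1 ->
     forall x1 x2, x1 \in partX S -> x2 \in partX S -> x1 != x2 ->
       ham_path S (inl x1) (inl x2)).

Definition balanced (W : {set X + Y}) : bool := #|partX W| == #|partY W|.

Definition k_ham_biconnected (k : nat) : Prop :=
  forall W : {set X + Y}, balanced W -> #|W| = k -> ham_biconnected (~: W).

End Bip.

(* M_{n,m}^{s,t}: X = 'I_n with X1 = {x < s}, X2 = {s <= x};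
   Y = 'I_m with Y1 = {y < m - t}, Y2 = {m - t <= y}.
   Edges: X1-Y1, X2-Y1, X2-Y2. *)
Definition adjM (n m s t : nat) (x : 'I_n) (y : 'I_m) : bool :=
  let inX1 := x < s in let inY1 := y < m - t in
  [|| inX1 && inY1, (~~ inX1) && inY1 | (~~ inX1) && (~~ inY1)].

(* N_{n,n}^{p,1}: index i < n lies in part 1 if i < n-p-2 (size n-p-2),
   in part 2 if n-p-2 <= i < n-1 (size p+1), in part 3 if i = n-1 (size 1). *)
Definition partN (n p i : nat) : nat :=
  if i < n - p - 2 then 1 else if i < n - 1 then 2 else 3.

Definition adjN (n p : nat) (x y : 'I_n) : bool :=
  let a := partN n p x in let b := partN n p y in
  (a == b) || ((a, b) \in [:: (1, 2); (2, 1); (2, 3); (3, 2)]).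

Arguments adjM n m s t x y : clear implicits.
Arguments adjN n p x y : clear implicits.

(* Main.v *)
Require Import Defs.
From mathcomp Require Import all_boot.
From mathcomp Require Import zify.
Set Implicit Arguments. Unset Strict Implicit. Unset Printing Implicit Defensive.
Lemma card_ordP n (Q : pred nat) : #|[pred x : 'I_n | Q x]| = count Q (iota 0 n).
Proof. by rewrite cardE /enum_mem size_filter -enumT -val_enum_ord count_map. Qed.
Lemma count_int a b n : a <= b <= n -> count (fun i => a <= i < b) (iota 0 n) = b - a.
Proof.
elim: n b => [|n IH] b; first by move=> h; have -> : b = 0 by lia.
move=> h; rewrite -addn1 iotaD count_cat /= add0n addn0.
case: (ltnP b n.+1) => hb.
  rewrite IH; last by lia.
  by rewrite andbF addn0.
rewrite andbT.
case: (leqP a n) => ha.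
 rewrite (@eq_in_count _ _ (fun i => a <= i < n)); last first.
   move=> i; rewrite mem_iota => hi /=; lia.
 rewrite IH; last by lia. lia.
have -> : count (fun i => a <= i < b) (iota 0 n) = 0.
  rewrite (@eq_in_count _ _ pred0) ?count_pred0 // => i; rewrite mem_iota /=; lia.
lia.
Qed.
Section G.
Variables (X Y : finType).
Lemma card_part (S : {set X + Y}) : #|S| = #|partX S| + #|partY S|.
Proof.
have eS : S = inl @: partX S :|: inr @: partY S.
  apply/setP => -[x|y]; rewrite !inE.
  - apply/idP/idP => [h|/orP[]]; first by apply/orP; left; apply/imsetP; exists x; rewrite ?inE.
     by case/imsetP => x' ; rewrite inE => h [->].
    by case/imsetP.
  - apply/idP/idP => [h|/orP[]]; first by apply/orP; right; apply/imsetP; exists y; rewrite ?inE.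
     by case/imsetP.
    by case/imsetP => x' ; rewrite inE => h [->].
rewrite {1}eS cardsU !card_imset; [|move=> a b [] //|move=> a b [] //].
have -> : inl @: partX S :&: inr @: partY S = set0.
  apply/setP => z; rewrite !inE; apply/negP => /andP [] /imsetP [a _ ->] /imsetP [b _] //.
by rewrite cards0 subn0.
Qed.

Fixpoint ecount (f : X + Y -> X + Y -> bool) (u : X + Y) (s : seq (X + Y)) : nat :=
  if s is v :: s' then f u v + ecount f v s' else 0.

Lemma ecount0 (C : pred (X + Y)) u s : ecount (fun a b => C a != C b) u s = 0 ->
  forall z, z \in u :: s -> C z = C u.
Proof.
elim: s u => [|v s IH] u /=; first by move=> _ z; rewrite inE => /eqP ->.
have [e|ne] := eqVneq (C u) (C v) => //= h z; rewrite inE => /orP [/eqP -> //|]; rewrite e; exact: IH.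
Qed.

Lemma countpath (e : rel (X + Y)) (A B : pred (X + Y)) u s :
  (forall a b, e a b -> A a + A b + (A a || B a != A b || B b) <= B a + B b) ->
  path e u s ->
  2 * count A (u :: s) + B u + B (last u s) + ecount (fun a b => A a || B a != A b || B b) u s
   <= 2 * count B (u :: s) + A u + A (last u s).
Proof.
move=> hE; elim: s u => [|v s IH] u /=; first by case: (A u); case: (B u).
case/andP=> huv /IH; have := hE _ _ huv. simpl in *. lia.
Qed.
End G.

Definition sfg n m (F G : pred nat) : {set 'I_n + 'I_m} :=
  [set z : 'I_n + 'I_m | match z with inl x => F x | inr y => G y end].

Lemma card_sfg n m F G : #|sfg n m F G| = count F (iota 0 n) + count G (iota 0 m).
Proof.
rewrite card_part -!card_ordP; congr (_ + _); apply: eq_card => x; by rewrite !inE.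
Qed.

Lemma count_ham (X Y : finType) (S : {set X + Y}) u s (P : pred (X + Y)) :
  uniq (u :: s) -> (forall z, (z \in u :: s) = (z \in S)) ->
  count P (u :: s) = #|[set z in S | P z]|.
Proof.
move=> hu hm; rewrite -size_filter.
have /card_uniqP <- : uniq (filter P (u :: s)) by exact: filter_uniq.
apply: eq_card => z; by rewrite mem_filter hm inE andbC.
Qed.

Definition AM (n m s : nat) (z : 'I_n + 'I_m) := if z is inl x then x < s else false.
Definition BM (n m t : nat) (z : 'I_n + 'I_m) := if z is inr y then y < m - t else false.

Lemma M_edge n m s t a b : bedge (adjM n m s t) a b ->
  AM s a + AM s b + (AM s a || BM t a != AM s b || BM t b) <= BM t a + BM t b.
Proof.
case: a b => [x|y] [x'|y'] //=; rewrite /adjM.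
  by case: (x < s); case: (y' < m - t).
by case: (x' < s); case: (y < m - t).
Qed.

Lemma M_obstruct n m s t p (u v : 'I_n + 'I_m) :
  0 < s -> s <= n -> p <= m - t ->
  ~~ AM s u -> ~~ BM t u -> ~~ AM s v -> ~~ BM t v ->
  ham_path (adjM n m s t) (~: sfg n m (fun x => s <= x < s + p) (fun y => y < p)) u v ->
  s < m - t - p.
Proof.
move=> s0 sn pm Au Bu Av Bv [l [hu hm hp hl]].
have := countpath (M_edge (s:=s) (t:=t)) hp.
rewrite hl (negbTE Au) (negbTE Bu) (negbTE Av) (negbTE Bv) !addn0.
rewrite !(count_ham _ hu hm).
have -> : #|[set z in ~: sfg n m (fun x => s <= x < s + p) (fun y => y < p) | AM s z]| = s.
  transitivity (count (fun i => 0 <= i < s) (iota 0 n) + count pred0 (iota 0 m)); last first.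
    by rewrite count_pred0 addn0 count_int ?sn // subn0.
  rewrite -card_sfg; apply: eq_card => -[x|y]; rewrite !inE /= ?andbF //.
  by case: (ltnP x s) => h; rewrite ?andbF ?andbT //; apply/negP => /andP[h1 _]; lia.
have -> : #|[set z in ~: sfg n m (fun x => s <= x < s + p) (fun y => y < p) | BM t z]| = m - t - p.
  transitivity (count pred0 (iota 0 n) + count (fun i => p <= i < m - t) (iota 0 m)); last first.
    by rewrite count_pred0 add0n count_int // pm leq_subr.
  rewrite -card_sfg; apply: eq_card => -[x|y]; rewrite !inE /= ?andbF //.
  by rewrite -leqNgt andbC.
set ec := ecount _ _ _.
have ec1 : 0 < ec.
  rewrite lt0n; apply/negP => /eqP /ecount0 h.
  have h0 : 0 < n by lia.
  have hs : (s <= 0) = false by lia.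
  have := h (inl (Ordinal h0)); rewrite hm !inE /= hs s0 /= => /(_ isT).
  by rewrite (negbTE Au) (negbTE Bu).
lia.
Qed.

Lemma last_nil (T : eqType) (x : T) s : last x s = x -> x \notin s -> s = [::].
Proof. case: s => // c s' /= e; have := mem_last c s'; rewrite e => h; by rewrite h. Qed.

Lemma bedge_sym (X Y : finType) (adj : X -> Y -> bool) a b : bedge adj a b = bedge adj b a.
Proof. by case: a b => [x|y] [x'|y']. Qed.

Lemma N_obstruct n p (hn : p + 6 <= n) (h2 : n - 2 < n) (h3 : n - 1 < n) :
  ~ ham_path (adjN n p) (~: sfg n n (fun x => n - p - 2 <= x < n - 2) (fun x => n - p - 2 <= x < n - 2))
      (inl (Ordinal h2)) (inr (Ordinal h2)).
Proof.
set S := ~: _.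
have nb3 : forall z, z \in S -> bedge (adjN n p) z (inr (Ordinal h3)) ->
   z = inl (Ordinal h2) \/ z = inl (Ordinal h3).
  case=> [x|y] //; rewrite !inE /= /adjN /partN /=.
  have -> : (n - 1 < n - p - 2) = false by lia.
  rewrite ltnn.
  case: ifP => h1; first by rewrite !inE.
  case: ifP => h1' hx _.
    by left; congr inl; apply: val_inj => /=; lia.
  by right; congr inl; apply: val_inj => /=; have := ltn_ord x; lia.
have nx3 : forall z, z \in S -> bedge (adjN n p) (inl (Ordinal h3)) z ->
   z = inr (Ordinal h2) \/ z = inr (Ordinal h3).
  case=> [x|y] //; rewrite !inE /= /adjN /partN /=.
  have -> : (n - 1 < n - p - 2) = false by lia.
  rewrite ltnn.
  case: ifP => h1; first by rewrite !inE.
  case: ifP => h1' hx _.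
    by left; congr inr; apply: val_inj => /=; lia.
  by right; congr inr; apply: val_inj => /=; have := ltn_ord y; lia.
move=> [s [hu hm hp hl]].
have y3in : inr (Ordinal h3) \in s.
  have := hm (inr (Ordinal h3)); rewrite !inE /=.
  have -> : (n - p - 2 <= n - 1 < n - 2) = false by lia.
  by move=> ->.
case/splitPr: y3in hu hm hp hl => s1 s2 hu hm hp hl.
set X2 := inl (Ordinal h2) in hu hm hp hl nb3.
set X3 := inl (Ordinal h3) in nb3 nx3.
set Y2 := inr (Ordinal h2) in hl nx3.
set Y3 := inr (Ordinal h3) in hu hm hp hl nb3 nx3.
rewrite cat_path /= in hp; case/and3P: hp => hp1 ha hp2.
rewrite last_cat /= in hl.
case: s2 hu hm hp2 hl => [|b s3] hu hm hp2 hl.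
  by move: hl; rewrite /Y3 /Y2 /= => -[]; lia.
case/andP: hp2 => hb hp3.
have bS : b \in S by rewrite -hm inE mem_cat !inE eqxx !orbT.
have hb' : bedge (adjN n p) b Y3 by rewrite bedge_sym.
have [eb|eb] := nb3 b bS hb'.
  by move: hu; rewrite eb /= mem_cat !inE eqxx !orbT.
subst b.
have aS : last X2 s1 \in S.
  rewrite -hm; move: (mem_last X2 s1); rewrite !inE mem_cat => /orP [->//|->]; by rewrite orbT.
have [ea|ea] := nb3 _ aS ha; last first.
  move: hu; rewrite /= cat_uniq => /andP [_ /and3P [_ /hasPn hd _]].
  have := hd X3; rewrite !inE eqxx orbT => /(_ isT).
  have := mem_last X2 s1; rewrite ea inE => /orP [/eqP e|->] //.
  by move: e; rewrite /X3 /X2 => -[]; lia.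
have s1n : s1 = [::].
  move: hu => /= /andP [h _]; apply: (@last_nil _ X2 s1 ea); apply: contra h => hh; by rewrite mem_cat hh.
rewrite s1n /= in hm hu. clear -hm hu hp3 hl nx3 hn.
case: s3 hp3 hl hm hu => [|c s4] hp3 hl hm hu.
  by rewrite /= /X3 /Y2 in hl.
case/andP: hp3 => hc hp4.
have cS : c \in S by rewrite -hm !inE eqxx !orbT.
have [ec|ec] := nx3 c cS hc; last first.
  by move: hu; rewrite ec !inE eqxx !orbT andbF.
subst c.
have s4n : s4 = [::].
  apply: last_nil; first by exact: hl.
  by move: hu => /and4P [_ _ _ /andP []].
subst s4.
have h0 : 0 < n by lia.
have := hm (inl (Ordinal h0)); rewrite !inE /=.
have -> : (n - p - 2 <= 0) = false by lia.
rewrite /X2 /X3 /Y2 andFb /= => /or3P [] /eqP // => -[]; lia.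
Qed.

Lemma partX_sfg n m F G : #|partX (sfg n m F G)| = count F (iota 0 n).
Proof. rewrite -card_ordP; apply: eq_card => x; by rewrite !inE. Qed.
Lemma partY_sfg n m F G : #|partY (sfg n m F G)| = count G (iota 0 m).
Proof. rewrite -card_ordP; apply: eq_card => x; by rewrite !inE. Qed.
Lemma partX_sfgC n m F G : #|partX (~: sfg n m F G)| = n - count F (iota 0 n).
Proof.
have -> : partX (~: sfg n m F G) = ~: partX (sfg n m F G) by apply/setP => x; rewrite !inE.
by rewrite cardsCs setCK card_ord partX_sfg.
Qed.
Lemma partY_sfgC n m F G : #|partY (~: sfg n m F G)| = m - count G (iota 0 m).
Proof.
have -> : partY (~: sfg n m F G) = ~: partY (sfg n m F G) by apply/setP => x; rewrite !inE.
by rewrite cardsCs setCK card_ord partY_sfg.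
Qed.

Theorem lemma2p8 :
  (forall p s t n : nat, 1 <= s -> 1 <= t ->
     maxn (s + p + 2) (t + p + 2) <= n -> n <= s + t + p + 1 ->
     ~ k_ham_biconnected (adjM n (n - 1) s t) (2 * p)) /\
  (forall p s t n : nat, 1 <= s -> 1 <= t -> n = s + t + p ->
     ~ k_ham_biconnected (adjM n n s t) (2 * p)) /\
  (forall p n : nat, p + 6 <= n ->
     ~ k_ham_biconnected (adjN n p) (2 * p)).
Proof.
split; [|split].
- move=> p s t n s1 t1; rewrite geq_max => /andP [hs ht] hn H.
  have := H (sfg n (n - 1) (fun x => s <= x < s + p) (fun y => 0 <= y < p)).
  rewrite /balanced partX_sfg partY_sfg card_sfg !count_int; try lia.
  move=> hW; case: hW; [by apply/eqP; lia | lia | move=> _].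
  rewrite partX_sfgC partY_sfgC !count_int; try lia.
  move=> /(_ _) h2.
  have ha : s + p < n by lia.
  have hb : s + p + 1 < n by lia.
  have := h2 _ (Ordinal ha) (Ordinal hb).
  rewrite !inE /= => /(_ _ _ _ _) hp.
  have hne : Ordinal ha != Ordinal hb by apply/eqP => -[]; lia.
  have {}hp := hp ltac:(lia) ltac:(lia) ltac:(lia) hne.
  have : s < n - 1 - t - p.
    apply: (M_obstruct s1 _ _ _ _ _ _ hp); rewrite /AM /BM /=; lia.
  lia.
- move=> p s t n s1 t1 hn H.
  have := H (sfg n n (fun x => s <= x < s + p) (fun y => 0 <= y < p)).
  rewrite /balanced partX_sfg partY_sfg card_sfg !count_int; try lia.
  move=> hW; case: hW; [by apply/eqP; lia | lia | move=> h1 _].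
  move: h1; rewrite partX_sfgC partY_sfgC !count_int; try lia.
  move=> /(_ _) h1.
  have ha : s + p < n by lia.
  have hb : n - 1 < n by lia.
  have := h1 _ (Ordinal ha) (Ordinal hb).
  rewrite !inE /= => /(_ _ _ _) hp.
  have {}hp := hp ltac:(lia) ltac:(lia) ltac:(lia).
  have : s < n - t - p.
    apply: (M_obstruct s1 _ _ _ _ _ _ hp); rewrite /AM /BM /=; lia.
  lia.
- move=> p n hn H.
  have h2 : n - 2 < n by lia.
  have h3 : n - 1 < n by lia.
  have := H (sfg n n (fun x => n - p - 2 <= x < n - 2) (fun x => n - p - 2 <= x < n - 2)).
  rewrite /balanced partX_sfg partY_sfg card_sfg !count_int; try lia.
  move=> hW; case: hW; [by [] | lia | move=> h1 _].
  move: h1; rewrite partX_sfgC partY_sfgC !count_int; try lia.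
  move=> /(_ _ (Ordinal h2) (Ordinal h2)) h1.
  apply: (N_obstruct hn h3); apply: h1; rewrite ?inE /=; lia.
Qed.
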